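(* Let $\mathbf c=\{c_n\}_{n=1}^{\infty}$ be a complex sequence with $\lim_{n\to\infty}c_n=0$, and let $\{R(n)\}$ be an $O$-regularly varying sequence such that for some constant $M(\mathbf c)>0$ $$\sum_{n=m}^{\infty}\left|\frac{c_n}{R(n)}-\frac{c_{n+1}}{R(n+1)}\right|\le M(\mathbf c)\frac{|c_m|}{R(m)}\qquad\text{for all } m=1,2,\dots.$$ Then there exist a natural number $N_0$ and a constant $M'>0$ such that $$\sum_{n=m}^{2m}|c_n-c_{n+1}|\le M'\max_{m\le n<m+N_0}|c_n|\qquad\text{for all } m=1,2,\dots.$$
   Context: A sequence $\{R(n)\}_{n=0}^\infty$ is $O$-regularly varying if it is non-decreasing, positive, and $\limsup_{n\to\infty}R(2n)/R(n)<\infty$. *)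

(* Defs.v *)
From Stdlib Require Import Reals List.
From Coquelicot Require Import Coquelicot.
Open Scope R_scope.

Definition O_regularly_varying (Rs : nat -> R) : Prop :=
  (forall n : nat, Rs n <= Rs (S n)) /\
  (forall n : nat, 0 < Rs n) /\
  Rbar_lt (LimSup_seq (fun n => Rs (2 * n)%nat / Rs n)) p_infty.

(* max_{m <= n < m + N} |c_n|  (meaningful for N >= 1; values are >= 0) *)
Definition max_abs_block (c : nat -> C) (m N : nat) : R :=
  fold_right Rmax 0 (map (fun n => Cmod (c n)) (seq m N)).

(* Main.v *)
Require Import Defs.
From Stdlib Require Import Reals List Lra Lia.
From Coquelicot Require Import Coquelicot.
Open Scope R_scope.

Lemma mono_le (Rs : nat -> R) : (forall n, Rs n <= Rs (S n)) ->
  forall j k, (j <= k)%nat -> Rs j <= Rs k.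
Proof.
  intros H j k Hjk. induction Hjk. lra. specialize (H m). lra.
Qed.

Lemma limsup_bound (f : nat -> R) : Rbar_lt (LimSup_seq f) p_infty ->
  exists K N, 0 < K /\ forall n, (N <= n)%nat -> f n <= K.
Proof.
  intros H. destruct (ex_LimSup_seq f) as [l Hl].
  rewrite (is_LimSup_seq_unique _ _ Hl) in H.
  destruct l as [l| |]; simpl in *.
  - destruct (Hl (mkposreal 1 Rlt_0_1)) as [_ [N HN]].
    exists (Rmax 1 (l+1)), N. split. apply Rlt_le_trans with 1; [lra|apply Rmax_l].
    intros n Hn. specialize (HN n Hn). simpl in HN.
    apply Rle_trans with (l+1); [lra|apply Rmax_r].
  - contradiction.
  - destruct (Hl 1) as [N HN]. exists 1, N. split. lra.
    intros n Hn. specialize (HN n Hn). lra.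
Qed.

Lemma growth (Rs : nat -> R) : O_regularly_varying Rs ->
  exists B, 0 < B /\ forall m, Rs (S (2 * m)) <= B * Rs m.
Proof.
  intros [Hmon [Hpos Hls]].
  destruct (limsup_bound _ Hls) as [K [N [HK HN]]].
  pose (B := Rmax (K * K) (Rs (S (2 * N)) / Rs 0%nat)).
  assert (HB0 : 0 < B).
  { apply Rlt_le_trans with (K*K). nra. apply Rmax_l. }
  exists B. split. exact HB0.
  intros m. destruct (Nat.lt_ge_cases N m) as [Hm|Hm].
  - destruct m as [|m']. lia.
    assert (H1 : Rs (2 * S (S m'))%nat <= K * Rs (S (S m'))).
    { specialize (HN (S (S m')) ltac:(lia)). cbv beta in HN.
      specialize (Hpos (S (S m'))).
      apply (Rmult_le_compat_r (Rs (S (S m')))) in HN; [|lra].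
      unfold Rdiv in HN. rewrite Rmult_assoc, Rinv_l in HN; lra. }
    assert (H2 : Rs (2 * S m')%nat <= K * Rs (S m')).
    { specialize (HN (S m') ltac:(lia)). cbv beta in HN.
      specialize (Hpos (S m')).
      apply (Rmult_le_compat_r (Rs (S m'))) in HN; [|lra].
      unfold Rdiv in HN. rewrite Rmult_assoc, Rinv_l in HN; lra. }
    pose proof (mono_le Rs Hmon (S (2 * S m')) (2 * S (S m')) ltac:(lia)).
    pose proof (mono_le Rs Hmon (S (S m')) (2 * S m') ltac:(lia)).
    assert (Rs (S (2 * S m')) <= K * K * Rs (S m')) by nra.
    pose proof (Hpos (S m')).
    apply Rle_trans with (K*K*Rs (S m')). lra.
    apply Rmult_le_compat_r. lra. apply Rmax_l.
  - pose proof (mono_le Rs Hmon (S (2*m)) (S (2*N)) ltac:(lia)).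
    pose proof (mono_le Rs Hmon 0 m ltac:(lia)).
    pose proof (Hpos 0%nat). pose proof (Hpos m).
    apply Rle_trans with (Rs (S (2 * N)) / Rs 0%nat * Rs m).
    + apply Rle_trans with (Rs (S (2 * N)) / Rs 0%nat * Rs 0%nat).
      * unfold Rdiv. rewrite Rmult_assoc, Rinv_l; lra.
      * apply Rmult_le_compat_l; [|lra].
        pose proof (Hpos (S (2*N))). apply Rlt_le, Rdiv_lt_0_compat; lra.
    + apply Rmult_le_compat_r. lra. apply Rmax_r.
Qed.

Fixpoint mysum (f : nat -> R) (j : nat) : R :=
  match j with O => 0 | S j => mysum f j + f j end.

Lemma sum_mysum (f : nat -> R) m j :
  sum_n_m f m (m + j) = mysum (fun k => f (m + k)%nat) (S j).
Proof.
  induction j.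
  - simpl. rewrite Nat.add_0_r, sum_n_n. lra.
  - rewrite Nat.add_succ_r, sum_n_Sm by lia. rewrite IHj.
    simpl. rewrite Nat.add_succ_r. reflexivity.
Qed.

Lemma mysum_nonneg f j : (forall k, 0 <= f k) -> 0 <= mysum f j.
Proof. intros H; induction j; simpl; [lra|]. specialize (H j). lra. Qed.

Lemma RtoC_neq0 r : r <> 0 -> RtoC r <> 0%C.
Proof. intros H E. apply (f_equal fst) in E. simpl in E. lra. Qed.

Lemma key (x y : C) (r s : R) : 0 < r -> r <= s ->
  Cmod (x - y) <= s * Cmod (x / RtoC r - y / RtoC s) + (s - r) * Cmod (x / RtoC r).
Proof.
  intros Hr Hrs.
  assert (Hr' : RtoC r <> 0%C) by (apply RtoC_neq0; lra).
  assert (Hs' : RtoC s <> 0%C) by (apply RtoC_neq0; lra).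
  assert (E : (x - y = RtoC s * (x / RtoC r - y / RtoC s) + RtoC (r - s) * (x / RtoC r))%C).
  { rewrite RtoC_minus. field. split; assumption. }
  rewrite E. eapply Rle_trans; [apply Cmod_triangle|].
  rewrite !Cmod_mult, !Cmod_R. rewrite (Rabs_pos_eq s) by lra.
  rewrite Rabs_left1 by lra. lra.
Qed.

Theorem theorem3 (c : nat -> C) (Rs : nat -> R) :
  filterlim c eventually (locally (0 : C)) ->
  O_regularly_varying Rs ->
  (exists Mc : R, 0 < Mc /\
     forall m : nat, (1 <= m)%nat ->
       exists Ssum : R,
         is_series (fun k : nat =>
            Cmod (c (m + k)%nat / RtoC (Rs (m + k)%nat)
                  - c (S (m + k)) / RtoC (Rs (S (m + k))))) Ssum /\
         Ssum <= Mc * (Cmod (c m) / Rs m)) ->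
  exists N0 : nat, (1 <= N0)%nat /\
  exists M' : R, 0 < M' /\
    forall m : nat, (1 <= m)%nat ->
      sum_n_m (fun n : nat => Cmod (c n - c (S n))) m (2 * m)
        <= M' * max_abs_block c m N0.
Proof.
  intros _ HR [Mc [HMc Hser]].
  destruct (growth Rs HR) as [B [HB HgB]].
  destruct HR as [Hmon [Hpos _]].
  exists 1%nat. split. lia. exists (B * (2 * Mc + 1)). split. nra.
  intros m Hm.
  unfold max_abs_block; simpl. rewrite Rmax_left by apply Cmod_ge_0.
  destruct (Hser m Hm) as [S0 [HS HSle]].
  set (a := fun n => (c n / RtoC (Rs n))%C).
  set (d := fun k => Cmod (a (m + k)%nat - a (S (m + k)))).
  set (T := Mc * (Cmod (c m) / Rs m)).
  assert (Hd0 : forall k, 0 <= d k) by (intros; apply Cmod_ge_0).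
  assert (Hd : forall j, mysum d j <= T).
  { intros j.
    assert (E : sum_n d j = mysum d (S j)).
    { unfold sum_n. pose proof (sum_mysum d 0 j) as E. simpl in E. exact E. }
    assert (Hle : sum_n d j <= S0).
    { apply (is_lim_seq_incr_compare (sum_n d) S0).
      - exact HS.
      - intros n. rewrite sum_Sn. specialize (Hd0 (S n)). simpl. 
        unfold plus; simpl. lra. }
    simpl in E. specialize (Hd0 j). unfold T. lra. }
  assert (Ha : forall j, Cmod (a (m + j)%nat) <= Cmod (a m) + mysum d j).
  { induction j.
    - rewrite Nat.add_0_r. simpl. lra.
    - simpl. rewrite Nat.add_succ_r.
      assert (Cmod (a (S (m + j))) <= Cmod (a (m + j)%nat) + d j).
      { replace (a (S (m + j))) with (a (m + j)%nat - (a (m + j)%nat - a (S (m + j))))%C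
          by ring.
        eapply Rle_trans; [apply Cmod_triangle|]. rewrite Cmod_opp. unfold d. lra. }
      lra. }
  set (A := Cmod (a m) + T).
  assert (HaA : forall j, Cmod (a (m + j)%nat) <= A).
  { intros j. specialize (Ha j). specialize (Hd j). unfold A. lra. }
  assert (Kn : forall n, Cmod (c n - c (S n)) <=
            Rs (S n) * Cmod (a n - a (S n)) + (Rs (S n) - Rs n) * Cmod (a n)).
  { intros n. apply key. apply Hpos. apply Hmon. }
  assert (Hmain : forall j,
    mysum (fun k => Cmod (c (m + k)%nat - c (S (m + k)))) (S j)
      <= Rs (S (m + j)) * mysum d (S j) + (Rs (S (m + j)) - Rs m) * A).
  { induction j.
    - simpl. rewrite Nat.add_0_r.
      pose proof (Kn m). pose proof (HaA 0%nat). rewrite Nat.add_0_r in H0.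
      pose proof (Hmon m).
      assert ((Rs (S m) - Rs m) * Cmod (a m) <= (Rs (S m) - Rs m) * A)
        by (apply Rmult_le_compat_l; lra).
      unfold d. rewrite Nat.add_0_r. lra.
    - change (mysum (fun k => Cmod (c (m + k)%nat - c (S (m + k)))) (S (S j)))
        with (mysum (fun k => Cmod (c (m + k)%nat - c (S (m + k)))) (S j)
              + Cmod (c (m + S j)%nat - c (S (m + S j)))).
      change (mysum d (S (S j))) with (mysum d (S j) + d (S j)).
      rewrite Nat.add_succ_r in *.
      pose proof (Kn (S (m + j))). pose proof (HaA (S j)).
      rewrite Nat.add_succ_r in H0.
      pose proof (Hmon (S (m + j))).
      assert ((Rs (S (S (m + j))) - Rs (S (m + j))) * Cmod (a (S (m + j)))
               <= (Rs (S (S (m + j))) - Rs (S (m + j))) * A)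
        by (apply Rmult_le_compat_l; lra).
      assert (Rs (S (m + j)) * mysum d (S j) <= Rs (S (S (m + j))) * mysum d (S j))
        by (apply Rmult_le_compat_r; [apply mysum_nonneg; exact Hd0|lra]).
      assert (d (S j) = Cmod (a (S (m + j)) - a (S (S (m + j))))).
      { unfold d. rewrite Nat.add_succ_r. reflexivity. }
      rewrite H4. lra. }
  replace (2 * m)%nat with (m + m)%nat by lia.
  rewrite sum_mysum.
  eapply Rle_trans; [apply Hmain|].
  pose proof (Hd (S m)).
  pose proof (Hpos m). pose proof (Hpos (S (m + m))).
  pose proof (mono_le Rs Hmon m (S (m + m)) ltac:(lia)).
  assert (Ham : Cmod (a m) = Cmod (c m) / Rs m).
  { unfold a. rewrite Cmod_div, Cmod_R, Rabs_pos_eq by (try apply RtoC_neq0; lra).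
    reflexivity. }
  set (q := Cmod (c m) / Rs m) in *.
  assert (Hq : 0 <= q) by (unfold q; apply Rdiv_le_0_compat; [apply Cmod_ge_0|lra]).
  assert (Hcm : Cmod (c m) = q * Rs m) by (unfold q; field; lra).
  rewrite Hcm. unfold A, T in *. rewrite Ham.
  pose proof (HgB m). replace (S (2 * m)) with (S (m + m)) in H3 by lia.
  assert (Rs (S (m + m)) * mysum d (S m) <= Rs (S (m + m)) * (Mc * q))
    by (apply Rmult_le_compat_l; lra).
  assert ((Rs (S (m + m)) - Rs m) * (q + Mc * q) <= Rs (S (m + m)) * (q + Mc * q))
    by (apply Rmult_le_compat_r; nra).
  assert (Rs (S (m + m)) * ((2 * Mc + 1) * q) <= B * Rs m * ((2 * Mc + 1) * q))
    by (apply Rmult_le_compat_r; nra).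
  rewrite !Nat.add_0_r. lra.
Qed.
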